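(* Let $H$ be an abelian subgroup of $\operatorname{Sym}_n$. Let $w_1,w_2,w_{1,1},w_{1,2},w_{1,3},w_{1,1}',w_{1,2}',w_{1,3}',w_{2,2},w_{2,1}',w_{2,2}',w_{2,3}'\in \mathrm{FM}_n$ be such that $$w_1=w_{1,1}w_{1,2}w_{1,3}=w_{1,1}'w_{1,2}'w_{1,3}',\qquad w_2=w_{1,1}'w_{2,2}w_{1,3}'=w_{2,1}'w_{2,2}'w_{2,3}',$$ and $\pi(w_{1,2})=\pi(w_{1,2}')=\pi(w_{2,2})=\pi(w_{2,2}')=z$. (i) If $w_{1,2}$ and $w_{1,2}'$ overlap in $w_1$, $w_{2,2}$ and $w_{2,2}'$ overlap in $w_2$, $|w_{1,3}|,|w_{2,3}'|<|w_{1,3}'|$ and $H_n=\{\mathrm{id}\}$, then $w_1=w_2$. (ii) If $w_{1,2}$ and $w_{1,2}'$ overlap in $w_1$, $w_{2,2}$ and $w_{2,2}'$ overlap in $w_2$, $|w_{1,1}|,|w_{2,1}'|<|w_{1,1}'|$ and $H_1=\{\mathrm{id}\}$, then $w_1=w_2$.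
   Context: $S=S_n(H)$ is the monoid with presentation $\langle a_1,\dots,a_n \mid a_1\cdots a_n = a_{\sigma(1)}\cdots a_{\sigma(n)},\ \sigma\in H\rangle$, and $z=a_1a_2\cdots a_n\in S$. $\mathrm{FM}_n=\langle x_1,\dots,x_n\rangle$ is the free monoid of rank $n$ and $\pi:\mathrm{FM}_n\to S$ is the monoid morphism with $\pi(x_i)=a_i$. $|w|$ is the length of a word $w$. $H_i=\{\sigma\in H\mid\sigma(i)=i\}$. Overlap: if $w=x_{i_1}\cdots x_{i_m}$ and $u=x_{i_p}\cdots x_{i_{p+r}}$, $v=x_{i_q}\cdots x_{i_{q+s}}$ are subwords at the indicated positions (here the positions are those determined by the given factorizations, e.g. $w_{1,2}$ occupies the positions after $w_{1,1}$ in $w_1$), then $u$ and $v$ overlap in $w$ if $p\leq q\leq p+r$ or $q\leq p\leq q+s$. *)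

(* Defs.v *)
From mathcomp Require Import all_boot all_fingroup.
Set Implicit Arguments. Unset Strict Implicit. Unset Printing Implicit Defensive.

(* Letters x_1..x_n are represented by 'I_n (0-indexed); words of FM_n by seq 'I_n. *)

Definition perm_word (n : nat) (s : {perm 'I_n}) : seq 'I_n :=
  [seq s i | i <- enum 'I_n].

Definition zword (n : nat) : seq 'I_n := enum 'I_n.

(* one elementary step of the congruence generated by the defining relations
   a_1...a_n = a_{s(1)}...a_{s(n)}, s in H (applied in either direction) *)
Definition rstep (n : nat) (H : {set {perm 'I_n}}) (u v : seq 'I_n) : Prop :=
  exists (p q : seq 'I_n) (s : {perm 'I_n}), s \in H /\
    ((u = p ++ zword n ++ q /\ v = p ++ perm_word s ++ q) \/
     (u = p ++ perm_word s ++ q /\ v = p ++ zword n ++ q)).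

(* equality in S_n(H) of the images under pi *)
Inductive req (n : nat) (H : {set {perm 'I_n}}) : seq 'I_n -> seq 'I_n -> Prop :=
  | req_refl u : req H u u
  | req_step u v w : rstep H u v -> req H v w -> req H u w.

Definition pi_is_z (n : nat) (H : {set {perm 'I_n}}) (w : seq 'I_n) : Prop :=
  req H w (zword n).

Definition stabH (n : nat) (H : {set {perm 'I_n}}) (i : 'I_n) : {set {perm 'I_n}} :=
  [set s in H | s i == i].

Definition overlap (p1 l1 p2 l2 : nat) : bool :=
  ((p1 <= p2) && (p2 < p1 + l1)) || ((p2 <= p1) && (p1 < p2 + l2)).

(* Main.v *)
Require Import Defs.
From mathcomp Require Import all_boot all_fingroup zify.
Set Implicit Arguments. Unset Strict Implicit.

Lemma gl n (H : {group {perm 'I_n.+1}}) (Hab : abelian H) x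
  (Hst : stabH H x = [set 1%g]) s t s' t' y z :
  s \in H -> t \in H -> s' \in H -> t' \in H ->
  t x = t' y -> s y = t z -> s' x = t' z -> s = s'.
Proof.
move=> sH tH s'H t'H Htx Hsy Hs'x.
set h := (t * t'^-1 * (s * t^-1) * (t' * s'^-1))%g.
have hH : h \in H by rewrite !groupM ?groupV.
have hx : h x = x by rewrite !permM Htx permK Hsy permK -Hs'x permK.
have : h \in stabH H x by rewrite inE hH hx eqxx.
rewrite Hst => /set1P h1.
have c : forall a b, a \in H -> b \in H -> commute a b by move=> a b aH bH; exact: (centsP Hab) a aH b bH.
have e : h = (s * s'^-1)%g.
  rewrite /h (c (t * t'^-1)%g) ?groupM ?groupV //.
  rewrite !mulgA.
  by rewrite -(mulgA s) mulVg mulg1 -(mulgA s) mulVg mulg1.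
by apply/eqP; rewrite eq_mulgV1 -e h1.
Qed.

Lemma req_z n (H : {group {perm 'I_n.+1}}) u v :
  req H u v -> v = zword n.+1 -> exists2 s, s \in H & u = perm_word s.
Proof.
elim=> [w ->|u1 v1 w1 Hs _ IH Hw].
  exists 1%g => //; rewrite /perm_word /zword.
  by rewrite (eq_map (g:=id)) ?map_id // => i; rewrite perm1.
case: (IH Hw) => t _ Hv.
have sz : size v1 = n.+1 by rewrite Hv size_map size_enum_ord.
case: Hs => p [q [s [sH [[E1 E2]|[E1 E2]]]]]; rewrite E2 !size_cat in sz.
- have sp : size p = 0 by rewrite /perm_word size_map size_enum_ord in sz; lia.
  have sq : size q = 0 by rewrite /perm_word size_map size_enum_ord in sz; lia.
  move/size0nil: sp => sp; move/size0nil: sq => sq.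
  exists 1%g => //; rewrite E1 sp sq cats0 /=.
  rewrite /perm_word /zword.
  by rewrite (eq_map (g:=id)) ?map_id // => i; rewrite perm1.
- have sp : size p = 0 by rewrite /zword size_enum_ord in sz; lia.
  have sq : size q = 0 by rewrite /zword size_enum_ord in sz; lia.
  move/size0nil: sp => sp; move/size0nil: sq => sq.
  by exists s => //; rewrite E1 sp sq cats0.
Qed.

Lemma nth_pw n (s : {perm 'I_n.+1}) i : i <= n ->
  nth ord0 (perm_word s) i = s (inord i).
Proof.
move=> hi; rewrite /perm_word (nth_map ord0) ?size_enum_ord //.
congr (s _); apply/val_inj; rewrite /= inordK // nth_enum_ord //.
Qed.

Lemma nth_mid n (w u v : seq 'I_n.+1) s i : w = u ++ perm_word s ++ v -> i <= n ->
  nth ord0 w (size u + i) = s (inord i).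
Proof.
move=> -> hi; rewrite nth_cat ltnNge leq_addr /= addKn nth_cat.
by rewrite /perm_word size_map size_enum_ord ltnS hi -/(perm_word s) nth_pw.
Qed.

Lemma nth_tail (T : Type) x0 (w u b v : seq T) j : w = u ++ b ++ v ->
  nth x0 w (size u + size b + j) = nth x0 v j.
Proof. by move=> ->; rewrite catA nth_cat size_cat ltnNge leq_addr /= addKn. Qed.

Lemma nth_head (T : Type) x0 (w u v : seq T) j : w = u ++ v -> j < size u ->
  nth x0 w j = nth x0 u j.
Proof. by move=> -> hj; rewrite nth_cat hj. Qed.

Lemma inord_max n : inord n = ord_max :> 'I_n.+1.
Proof. by apply/val_inj; rewrite /= inordK. Qed.
Lemma inord_0 n : inord 0 = ord0 :> 'I_n.+1.
Proof. by apply/val_inj; rewrite /= inordK. Qed.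

Lemma core1 n (H : {group {perm 'I_n.+1}}) (Hab : abelian H)
  (Hst : stabH H ord_max = [set 1%g]) (f1 f2 : nat -> 'I_n.+1) p a b s t s' t' :
  s \in H -> t \in H -> s' \in H -> t' \in H ->
  p < a -> a <= b -> b <= p + n ->
  (forall i, i <= n -> f1 (p + i) = s (inord i)) ->
  (forall i, i <= n -> f1 (a + i) = t (inord i)) ->
  (forall i, i <= n -> f2 (p + i) = s' (inord i)) ->
  (forall i, i <= n -> f2 (b + i) = t' (inord i)) ->
  (forall j, f1 (p + n.+1 + j) = f2 (p + n.+1 + j)) -> s = s'.
Proof.
move=> sH tH s'H t'H pa ab bp Hs Ht Hs' Ht' Htl.
apply: (gl Hab Hst (y := inord (n - (b - a))) (z := inord (n - (b - p))) sH tH s'H t'H).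
- rewrite -inord_max -Ht // -Ht' ?leq_subr //.
  have -> : a + n = p + n.+1 + (a - p - 1) by lia.
  rewrite Htl; congr f2; lia.
- rewrite -Hs ?leq_subr // -Ht ?leq_subr //; congr f1; lia.
- rewrite -inord_max -Hs' // -Ht' ?leq_subr //; congr f2; lia.
Qed.

Lemma core2 n (H : {group {perm 'I_n.+1}}) (Hab : abelian H)
  (Hst : stabH H ord0 = [set 1%g]) (f1 f2 : nat -> 'I_n.+1) p a b s t s' t' :
  s \in H -> t \in H -> s' \in H -> t' \in H ->
  b <= a -> a < p -> p <= b + n ->
  (forall i, i <= n -> f1 (p + i) = s (inord i)) ->
  (forall i, i <= n -> f1 (a + i) = t (inord i)) ->
  (forall i, i <= n -> f2 (p + i) = s' (inord i)) ->
  (forall i, i <= n -> f2 (b + i) = t' (inord i)) ->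
  (forall j, j < p -> f1 j = f2 j) -> s = s'.
Proof.
move=> sH tH s'H t'H ba ap pb Hs Ht Hs' Ht' Htl.
apply: (gl Hab Hst (y := inord (a - b)) (z := inord (p - b)) sH tH s'H t'H).
- rewrite -inord_0 -Ht // -Ht' ?leq_subr; last lia.
  rewrite addn0 Htl //; congr f2; lia.
- rewrite -Hs; last lia. rewrite -Ht; last lia. congr f1; lia.
- rewrite -inord_0 -Hs' // -Ht'; last lia. congr f2; lia.
Qed.

Theorem lemma2p1 (n : nat) (H : {group {perm 'I_n.+1}}) (Hab : abelian H)
  (w1 w2 w11 w12 w13 w11' w12' w13' w22 w21' w22' w23' : seq 'I_n.+1) :
  w1 = w11 ++ w12 ++ w13 ->
  w1 = w11' ++ w12' ++ w13' ->
  w2 = w11' ++ w22 ++ w13' ->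
  w2 = w21' ++ w22' ++ w23' ->
  pi_is_z H w12 -> pi_is_z H w12' -> pi_is_z H w22 -> pi_is_z H w22' ->
  (overlap (size w11) (size w12) (size w11') (size w12') ->
   overlap (size w11') (size w22) (size w21') (size w22') ->
   size w13 < size w13' -> size w23' < size w13' ->
   stabH H ord_max = [set 1%g] ->
   w1 = w2) /\
  (overlap (size w11) (size w12) (size w11') (size w12') ->
   overlap (size w11') (size w22) (size w21') (size w22') ->
   size w11 < size w11' -> size w21' < size w11' ->
   stabH H ord0 = [set 1%g] ->
   w1 = w2).
Proof.
move=> E1 E1' E2 E2' P1 P2 P3 P4.
case: (req_z P1 erefl) => t tH et.
case: (req_z P2 erefl) => s sH es.
case: (req_z P3 erefl) => s' s'H es'.
case: (req_z P4 erefl) => t' t'H et'.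
have szp : forall r : {perm 'I_n.+1}, size (perm_word r) = n.+1.
  by move=> r; rewrite size_map size_enum_ord.
subst w12 w12' w22 w22'.
have S1 := congr1 size (etrans (esym E1) E1'); rewrite !size_cat !szp in S1.
have S2 := congr1 size (etrans (esym E2') E2); rewrite !size_cat !szp in S2.
rewrite !szp /overlap.
have W1 : w1 = w11' ++ perm_word s ++ w13' by [].
have W2 : w2 = w11' ++ perm_word s' ++ w13' by [].
have fin : s = s' -> w1 = w2 by move=> e; rewrite W1 W2 e.
set f1 := fun k => nth ord0 w1 k.
set f2 := fun k => nth ord0 w2 k.
have A1 : forall i, i <= n -> f1 (size w11' + i) = s (inord i) by move=> i; exact: nth_mid E1'.
have A2 : forall i, i <= n -> f1 (size w11 + i) = t (inord i) by move=> i; exact: nth_mid E1.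
have A3 : forall i, i <= n -> f2 (size w11' + i) = s' (inord i) by move=> i; exact: nth_mid E2.
have A4 : forall i, i <= n -> f2 (size w21' + i) = t' (inord i) by move=> i; exact: nth_mid E2'.
split.
- move=> /orP O1 /orP O2 l1 l2 Hst; apply: fin.
  have T : forall j, f1 (size w11' + n.+1 + j) = f2 (size w11' + n.+1 + j).
    move=> j; have := nth_tail ord0 j E1'; have := nth_tail ord0 j E2.
    by rewrite !szp /f1 /f2 => -> ->.
  have pa : size w11' < size w11 by lia.
  have ap : size w11 <= size w11' + n by case: O1 => /andP[]; lia.
  have bp : size w21' <= size w11' + n by case: O2 => /andP[]; lia.
  have pb : size w11' < size w21' by lia.
  case: (leqP (size w11) (size w21')) => ab.
    exact: (core1 Hab Hst (f1 := f1) (f2 := f2) sH tH s'H t'H pa ab bp A1 A2 A3 A4 T).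
  symmetry; apply: (core1 Hab Hst (f1 := f2) (f2 := f1) s'H t'H sH tH pb (ltnW ab) ap A3 A4 A1 A2).
  by move=> j; rewrite T.
- move=> /orP O1 /orP O2 l1 l2 Hst; apply: fin.
  have T : forall j, j < size w11' -> f1 j = f2 j.
    by move=> j hj; rewrite /f1 /f2 (nth_head _ E1') // (nth_head _ E2).
  have ap : size w11' <= size w11 + n by case: O1 => /andP[]; lia.
  have bp : size w11' <= size w21' + n by case: O2 => /andP[]; lia.
  case: (leqP (size w21') (size w11)) => ba.
    exact: (core2 Hab Hst (f1 := f1) (f2 := f2) sH tH s'H t'H ba l1 bp A1 A2 A3 A4 T).
  symmetry; apply: (core2 Hab Hst (f1 := f2) (f2 := f1) s'H t'H sH tH (ltnW ba) l2 ap A3 A4 A1 A2).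
  by move=> j hj; rewrite T.
Qed.
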